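(* If $X$ is a GO-space and $E$ is a countable metrizable space, then $E\times X$ is $C$-selective.
   Context: All spaces are assumed $T_1$. A GO-space (generalized ordered space) is a linearly ordered set with a topology finer than the order topology that has a base of order-convex sets. For spaces $Y$, $X$, a map $\varphi:Y\to\mathcal P(X)\setminus\{\emptyset\}$ is lower semicontinuous (l.s.c.) if $\{y:\varphi(y)\cap U\neq\emptyset\}$ is open in $Y$ for every open $U\subseteq X$; a selection is a map $f:Y\to X$ with $f(y)\in\varphi(y)$ for all $y$. $X$ is $Y$-selective if every l.s.c. map from $Y$ to the nonempty closed subsets of $X$ has a continuous selection; $X$ is $C$-selective if it is $Y$-selective for every countable regular space $Y$. *)

(* Defs.v *)
From HB Require Import structures.
From mathcomp Require Import all_boot all_order all_algebra.
From mathcomp Require Import all_classical all_reals all_analysis.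
From mathcomp Require Import Rstruct Rstruct_topology.
Set Implicit Arguments. Unset Strict Implicit. Unset Printing Implicit Defensive.
Import Order.TTheory GRing.Theory Num.Theory.
Local Open Scope classical_set_scope.
Local Open Scope ring_scope.

(* T1 space (all spaces assumed T1 in the paper). *)
Definition T1_space (T : topologicalType) : Prop := @accessible_space T.

Definition order_convex (X : Type) (le : X -> X -> Prop) (A : set X) : Prop :=
  forall a b c, A a -> A c -> le a b -> le b c -> A b.

Definition linear_order (X : Type) (le : X -> X -> Prop) : Prop :=
  [/\ (forall x, le x x),
      (forall x y, le x y -> le y x -> x = y),
      (forall x y z, le x y -> le y z -> le x z)
    & (forall x y, le x y \/ le y x)].

(* GO-space: a linearly ordered set whose topology is finer than the order
   topology (every open ray is open; open rays form a subbase of the order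
   topology) and which has a base of order-convex open sets. *)
Definition GO_space (X : topologicalType) (le : X -> X -> Prop) : Prop :=
  [/\ linear_order le,
      (forall a : X, open [set x | le a x /\ x <> a]),
      (forall a : X, open [set x | le x a /\ x <> a])
    & (forall (U : set X) (x : X), open U -> U x ->
         exists V : set X, [/\ open V, order_convex le V, V x & V `<=` U])].

Definition metrizable (E : topologicalType) : Prop :=
  exists d : E -> E -> Rdefinitions.R,
    [/\ (forall x y, 0 <= d x y),
        (forall x y, d x y = 0 <-> x = y),
        (forall x y, d x y = d y x),
        (forall x y z, d x z <= d x y + d y z)
      & (forall U : set E,
           open U <-> (forall x, U x -> exists2 e : Rdefinitions.R, 0 < e &
                        [set y | d x y < e] `<=` U))].

Definition lsc (Y X : topologicalType) (phi : Y -> set X) : Prop :=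
  forall U : set X, open U -> open [set y | phi y `&` U !=set0].

Definition selective_for (Y X : topologicalType) : Prop :=
  forall phi : Y -> set X,
    (forall y, closed (phi y) /\ phi y !=set0) -> lsc phi ->
    exists f : Y -> X, continuous f /\ (forall y, phi y (f y)).

Definition C_selective (X : topologicalType) : Prop :=
  forall Y : topologicalType,
    countable [set: Y] -> @regular_space Y -> T1_space Y ->
    selective_for Y X.

(* Main.v *)
Require Import Defs.
From HB Require Import structures.
From mathcomp Require Import all_boot all_order all_algebra.
From mathcomp Require Import all_classical all_reals all_analysis.
From mathcomp Require Import Rstruct Rstruct_topology.
Set Implicit Arguments. Unset Strict Implicit. Unset Printing Implicit Defensive.
Import Order.TTheory GRing.Theory Num.Theory.
Local Open Scope classical_set_scope.
From mathcomp Require Import lra.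

Lemma closure_min (T : topologicalType) (A K : set T) :
  closed K -> A `<=` K -> closure A `<=` K.
Proof.
move=> cK AK; have := closureS AK; by rewrite -(proj1 (closure_id K) cK).
Qed.

Lemma nbhs_open (T : topologicalType) (A : set T) x : open A -> A x -> nbhs x A.
Proof. by move=> oA Ax; apply: open_nbhs_nbhs. Qed.

Lemma reg_shrink (T : topologicalType) : regular_space T ->
  forall (A : set T) a, open A -> A a ->
  exists B, [/\ open B, B a & closure B `<=` A].
Proof.
move=> hr A a oA Aa; have nA : nbhs a A by exact: nbhs_open.
have [B nB clB] := hr a A nA.
exists B°; split; first exact: open_interior.
  exact: nbhs_singleton (nbhs_interior nB).
exact: subset_trans (closureS (@interior_subset _ B)) clB.
Qed.

Section ClopenBase.
Variable Y : topologicalType.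
Hypothesis cY : countable [set: Y].
Hypothesis rY : regular_space Y.

Definition InvUV (O : set Y) (p : set Y * set Y) :=
  [/\ open p.1, open p.2, closure p.1 `&` closure p.2 = set0
   & closure p.1 `<=` O].

Lemma clopen_step (O : set Y) (z : Y) (p : set Y * set Y) : open O -> InvUV O p ->
  exists q : set Y * set Y,
   [/\ InvUV O q, p.1 `<=` q.1, p.2 `<=` q.2 & q.1 z \/ q.2 z].
Proof.
move=> oO; case: p => U V [/= oU oV disj clUO].
case: (pselect (O z /\ ~ closure V z)) => [[Oz nVz]|h].
{ have [W [oW Wz clW]] := @reg_shrink _ rY (O `&` ~` closure V) z
    (openI oO (closed_openC (@closed_closure _ V))) (conj Oz nVz).
  exists (U `|` W, V); split => //=; try by [left; right | move=> x; left].
    split => //=; first exact: openU.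
      rewrite closureU -subset0 => x [[Ux|Wx] Vx].
        by have : (closure U `&` closure V) x by []; rewrite disj.
      by have [_] := clW x Wx.
    by rewrite closureU => x [/clUO//|/clW []].
  }
have nUz : ~ closure U z.
  move=> Uz; apply: h; split; first exact: clUO.
  by move=> Vz; have : (closure U `&` closure V) z by []; rewrite disj.
have [W [oW Wz clW]] := @reg_shrink _ rY (~` closure U) z
    (closed_openC (@closed_closure _ U)) nUz.
exists (U, V `|` W); split => //=; try by [right; right | move=> x; left].
  split => //=; first exact: openU.
  rewrite closureU -subset0 => x [Ux [Vx|Wx]].
    by have : (closure U `&` closure V) x by []; rewrite disj.
  exact: (clW x Wx).
Qed.

Lemma clopen_base (O : set Y) (y0 : Y) : open O -> O y0 ->
  exists C : set Y, [/\ open C, closed C, C y0 & C `<=` O].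
Proof.
move=> oO Oy0; have [c cinj] := countable_injP _ cY.
have step : forall np : nat * (set Y * set Y), exists q : set Y * set Y,
    InvUV O np.2 -> [/\ InvUV O q, np.2.1 `<=` q.1, np.2.2 `<=` q.2 &
       forall z, c z = np.1 -> q.1 z \/ q.2 z].
  move=> [n p] /=.
  case: (pselect (exists z, c z = n)) => [[z cz]|nz]; last first.
    by exists p => Ip; split => // z cz; exfalso; apply: nz; exists z.
  case: (pselect (InvUV O p)) => [Ip|nI]; last by exists p.
  have [q [Iq h1 h2 h3]] := clopen_step z oO Ip.
  exists q => _; split => // z' cz'.
  have -> : z' = z by apply: cinj; rewrite ?inE // cz cz'.
  exact: h3.
have [F HF] := choice step.
have [W0 [oW0 W0y clW0]] := reg_shrink rY oO Oy0.
have I0 : InvUV O (W0, set0).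
  split => //=; first exact: open0.
  by rewrite closure0 setI0.
pose st := fix st n := if n is m.+1 then F (m, st m) else (W0, set0).
have Ist : forall n, InvUV O (st n).
  elim => [//|n IH] /=; by have [] := HF (n, st n) IH.
have mono : forall n m, (n <= m)%N -> (st n).1 `<=` (st m).1 /\ (st n).2 `<=` (st m).2.
  move=> n; elim => [|m IH]; first by rewrite leqn0 => /eqP ->; split.
  rewrite leq_eqVlt => /orP [/eqP ->|]; first by split.
  rewrite ltnS => /IH [h1 h2].
  have [_ g1 g2 _] := HF (m, st m) (Ist m).
  by split; [exact: subset_trans h1 g1 | exact: subset_trans h2 g2].
pose C := \bigcup_(n in [set: nat]) (st n).1.
pose D := \bigcup_(n in [set: nat]) (st n).2.
have oC : open C by apply: bigcup_open => n _; have [] := Ist n.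
have oD : open D by apply: bigcup_open => n _; have [] := Ist n.
have CD : C = ~` D.
  apply/seteqP; split => x.
    move=> [n _ Cx] [m _ Dx].
    have [h1 _] := mono n (maxn n m) (leq_maxl n m).
    have [_ h2] := mono m (maxn n m) (leq_maxr n m).
    have [_ _ disj _] := Ist (maxn n m).
    have : (closure (st (maxn n m)).1 `&` closure (st (maxn n m)).2) x.
      by split; apply: subset_closure; [exact: h1 | exact: h2].
    by rewrite disj.
  move=> nDx; have [_ _ _ /(_ x erefl) [h|h]] := HF (c x, st (c x)) (Ist (c x)).
    by exists (c x).+1.
  by exfalso; apply: nDx; exists (c x).+1.
exists C; split => //.
- by rewrite CD; apply: open_closedC.
- by exists 0%N.
- move=> x [n _ Cx]; have [_ _ _ h] := Ist n; apply: h; exact: subset_closure.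
Qed.
End ClopenBase.

Lemma nested_clopen (Y : topologicalType) : countable [set: Y] ->
  regular_space Y -> T1_space Y -> forall (y0 : Y) (O : nat -> set Y),
  (forall k, open (O k) /\ O k y0) ->
  exists C : nat -> set Y, [/\ C 0%N = setT,
    (forall k, open (C k) /\ closed (C k)),
    (forall k, C k.+1 `<=` C k /\ C k.+1 `<=` O k),
    (forall k, C k y0) & (forall y, y <> y0 -> exists k, ~ C k y)].
Proof.
move=> cY rY tY y0 O hO; have [c cinj] := countable_injP _ cY.
have hD : forall k, exists D : set Y, [/\ open D /\ closed D, D y0, D `<=` O k &
    forall z, c z = k -> z <> y0 -> ~ D z].
  move=> k; have [oO Oy0] := hO k.
  case: (pselect (exists z, c z = k /\ z <> y0)) => [[z [cz zy0]]|nz].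
    have oA : open (O k `&` ~` [set z]).
      by apply: openI oO _; apply: closed_openC; apply: accessible_closed_set1.
    have [D [oD cD Dy0 DA]] := clopen_base cY rY oA (conj Oy0 (nesym zy0)).
    exists D; split => //; first by move=> x /DA [].
    move=> z' cz' z'y0 Dz'.
    have ez : z' = z by apply: cinj; rewrite ?inE // cz cz'.
    rewrite ez in Dz'; have [_ h] := DA z Dz'; exact: h.
  have [D [oD cD Dy0 DA]] := clopen_base cY rY oO Oy0.
  exists D; split => // z cz zy0; exfalso; by apply: nz; exists z.
have [D HD] := choice hD.
pose C := fix C n := if n is m.+1 then C m `&` D m else setT.
exists C; split => //.
- elim => [|k [oC cC]] /=; first by split; [exact: openT | exact: closedT].
  have [[oD cD] _ _ _] := HD k.
  by split; [exact: openI | exact: closedI].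
- move=> k /=; split => x [Cx Dx] //; have [_ _ DO _] := HD k; exact: DO.
- elim => [//|k IH] /=; split => //; by have [] := HD k.
- move=> y yy0; exists (c y).+1 => /= [[_ Dy]].
  by have [_ _ _ /(_ y erefl yy0)] := HD (c y).
Qed.

Definition goodmap (Y Z : topologicalType) (psi : Y -> set Z) :=
  (forall y, closed (psi y) /\ psi y !=set0) /\ lsc psi.

Lemma selection_from_key (Y Z : topologicalType) : countable [set: Y] ->
  (forall (psi : Y -> set Z) y0, goodmap psi -> exists psi' : Y -> set Z,
     [/\ goodmap psi', (forall y, psi' y `<=` psi y) &
        exists z0, psi' y0 = [set z0] /\
        (forall W, open W -> W z0 -> nbhs y0 [set y | psi' y `<=` W])]) ->
  forall phi : Y -> set Z, goodmap phi ->
  exists f : Y -> Z, continuous f /\ (forall y, phi y (f y)).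
Proof.
move=> cY key phi gphi; have [c cinj] := countable_injP _ cY.
have step : forall np : nat * (Y -> set Z), exists psi' : Y -> set Z,
   goodmap np.2 -> [/\ goodmap psi', (forall y, psi' y `<=` np.2 y) &
     forall y, c y = np.1 -> exists z0, psi' y = [set z0] /\
        (forall W, open W -> W z0 -> nbhs y [set y' | psi' y' `<=` W])].
  move=> [n psi] /=.
  case: (pselect (exists y, c y = n)) => [[y cy]|ny]; last first.
    exists psi => gp; split => //; first by move=> y' z'.
    move=> y cy; exfalso; apply: ny; by exists y.
  case: (pselect (goodmap psi)) => [gp|ngp]; last by exists psi.
  have [psi' [gp' sub [z0 [e u]]]] := key psi y gp.
  exists psi' => _; split => // y' cy'.
  have -> : y' = y by apply: cinj; rewrite ?inE // cy cy'.
  by exists z0.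
have [F HF] := choice step.
pose ps := fix ps n := if n is m.+1 then F (m, ps m) else phi.
have gps : forall n, goodmap (ps n).
  elim => [//|n IH] /=; by have [] := HF (n, ps n) IH.
have mono : forall n m y, (n <= m)%N -> ps m y `<=` ps n y.
  move=> n; elim => [|m IH] y; first by rewrite leqn0 => /eqP ->.
  rewrite leq_eqVlt => /orP [/eqP -> //|]; rewrite ltnS => /(IH y) h.
  have [_ g _] := HF (m, ps m) (gps m).
  exact: subset_trans (g y) h.
have hf : forall y, exists z0, ps (c y).+1 y = [set z0] /\
        (forall W, open W -> W z0 -> nbhs y [set y' | ps (c y).+1 y' `<=` W]).
  move=> y; have [_ _ h] := HF (c y, ps (c y)) (gps (c y)); exact: h.
have [f Hf] := choice hf.
have inps : forall m y, ps m y (f y).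
  move=> m y; have [e _] := Hf y.
  case: (leqP m (c y).+1) => hm.
    by apply: (mono _ _ y hm); rewrite e.
  have [_ [z psz]] := (gps m).1 y.
  have : ps (c y).+1 y z by apply: (mono _ _ y (ltnW hm)).
  by rewrite e => <-.
exists f; split; last exact: (inps 0%N).
apply/continuousP => A oA; rewrite openE => y Ay.
have [_ u] := Hf y; apply: filterS (u A oA Ay) => y' h; exact: h _ (inps _ y').
Qed.

Lemma generic_key (Y Z : topologicalType) : countable [set: Y] ->
  regular_space Y -> T1_space Y ->
  forall (psi : Y -> set Z) (y0 : Y) (z0 : Z) (V S : nat -> set Z),
  goodmap psi -> psi y0 z0 -> closed [set z0] ->
  (forall k, open (V k) /\ V k z0) ->
  (forall k y z (U : set Z), psi y z -> S k z -> open U -> U z ->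
     nbhs y [set y' | exists2 z', psi y' z' & S k z' /\ U z']) ->
  (forall k y z, psi y z -> V k z -> exists2 z', psi y z' & S k z') ->
  (forall W, open W -> W z0 -> exists k, forall j, (k <= j)%N ->
      closure (S j) `<=` W) ->
  exists psi' : Y -> set Z, [/\ goodmap psi', (forall y, psi' y `<=` psi y) &
   exists z1, psi' y0 = [set z1] /\
     (forall W, open W -> W z1 -> nbhs y0 [set y | psi' y `<=` W])].
Proof.
move=> cY rY tY psi y0 z0 V S [cpsi lpsi] pz0 cz0 hV ha hb hc.
pose O k := [set y | psi y `&` V k !=set0].
have hO : forall k, open (O k) /\ O k y0.
  move=> k; have [oV Vz0] := hV k; split; first exact: lpsi.
  by exists z0.
have [C [C0 cC Cdec Cy0 Cex]] := nested_clopen cY rY tY hO.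
have Cmono : forall n m, (n <= m)%N -> C m `<=` C n.
  move=> n; elim => [|m IH]; first by rewrite leqn0 => /eqP ->.
  rewrite leq_eqVlt => /orP [/eqP -> //|]; rewrite ltnS => /IH h.
  have [g _] := Cdec m; exact: subset_trans g h.
have piece_ex : forall y, y <> y0 -> exists k, C k y /\ ~ C k.+1 y.
  move=> y /Cex [k nk]; elim: k nk => [|k IH] nk; first by exfalso; apply: nk; rewrite C0.
  by case: (pselect (C k y)) => [Ck|nCk]; [exists k | exact: IH].
have piece_ge : forall y k m, C k y -> C m y -> ~ C m.+1 y -> (k <= m)%N.
  move=> y k m Ck Cm nCm; rewrite leqNgt; apply/negP => mk; apply: nCm.
  exact: (Cmono m.+1 k mk).
pose val k y := if k is j.+1 then closure (psi y `&` S j) else psi y.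
pose psi' y := if pselect (y = y0) then [set z0]
  else [set z | exists k, [/\ C k y, ~ C k.+1 y & val k y z]].
have psi'E : forall y k, y <> y0 -> C k y -> ~ C k.+1 y -> psi' y = val k y.
  move=> y k yy0 Ck nCk; rewrite /psi'; destruct (pselect (y = y0)) as [e|ne]; first by case: (yy0 e).
  apply/seteqP; split => z; last by move=> vz; exists k.
  move=> [m [Cm nCm vz]].
  have e : k = m.
    by apply/eqP; rewrite eqn_leq (piece_ge y k m) ?(piece_ge y m k).
  by rewrite e.
have psi'y0 : psi' y0 = [set z0] by rewrite /psi'; destruct (pselect (y0 = y0)).
have val_closed : forall k y, closed (val k y).
  by case => [|j] y /=; [exact: (cpsi y).1 | exact: closed_closure].
have val_sub : forall k y, val k y `<=` psi y.
  case => [|j] y //=; apply: closure_min; first exact: (cpsi y).1.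
  by move=> z [].
have val_ne : forall k y, C k y -> val k y !=set0.
  case => [|j] y Cy /=; first exact: (cpsi y).2.
  have [_ CO] := Cdec j; have [z [pz Vz]] := CO y Cy.
  have [z' pz' Sz'] := hb j y z pz Vz.
  by exists z'; apply: subset_closure.
have usc_aux : forall W, open W -> W z0 -> exists k, forall y, C k.+1 y ->
    psi' y `<=` W /\ psi' y `&` W !=set0.
  move=> W oW Wz0; have [k hk] := hc W oW Wz0; exists k => y Cy.
  case: (pselect (y = y0)) => [->|yy0].
    by rewrite psi'y0; split; [move=> z -> | exists z0].
  have [m [Cm nCm]] := piece_ex y yy0.
  have km := piece_ge y k.+1 m Cy Cm nCm.
  rewrite (psi'E y m yy0 Cm nCm).
  case: m Cm nCm km => [//|j] Cm nCm km.
  have sub : closure (psi y `&` S j) `<=` W.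
    apply: subset_trans (hk j km); apply: closureS; by move=> z [].
  split => //=; have [z vz] := val_ne j.+1 y Cm.
  by exists z; split => //; exact: sub.
have notP : forall y m, ~ C m.+1 y -> y <> y0.
  by move=> y m nC e; apply: nC; rewrite e.
exists psi'; split.
- split.
    move=> y; case: (pselect (y = y0)) => [->|yy0].
      by rewrite psi'y0; split => //; exists z0.
    have [m [Cm nCm]] := piece_ex y yy0; rewrite (psi'E y m yy0 Cm nCm).
    by split; [exact: val_closed | exact: val_ne].
  move=> U oU; rewrite openE => y [z [p'z Uz]].
  case: (pselect (y = y0)) => [eyy0|yy0].
    subst y; rewrite psi'y0 in p'z; rewrite /= in p'z; subst z.
    have [k hk] := usc_aux U oU Uz.
    apply: filterS (nbhs_open (cC k.+1).1 (Cy0 k.+1)) => y' Cy'.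
    exact: (hk y' Cy').2.
  have [m [Cm nCm]] := piece_ex y yy0.
  have nP : nbhs y (C m `&` ~` C m.+1).
    apply: nbhs_open; last by split.
    exact: openI (cC m).1 (closed_openC (cC m.+1).2).
  rewrite (psi'E y m yy0 Cm nCm) in p'z.
  case: m Cm nCm nP p'z => [|j] Cm nCm nP /= p'z.
    have nL : nbhs y [set y' | psi y' `&` U !=set0].
      by apply: nbhs_open; [exact: lpsi | exists z].
    apply: filterS (filterI nP nL) => y' [[Cy' nCy'] h].
    change (psi' y' `&` U !=set0); by rewrite (psi'E y' 0%N (notP _ _ nCy') Cy' nCy').
  have [z1 [[pz1 Sz1] Uz1]] := p'z U (nbhs_open oU Uz).
  have nA := ha j y z1 U pz1 Sz1 oU Uz1.
  apply: filterS (filterI nP nA) => y' [[Cy' nCy'] [z' pz' [Sz' Uz']]].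
  change (psi' y' `&` U !=set0).
  rewrite (psi'E y' j.+1 (notP _ _ nCy') Cy' nCy') /=.
  by exists z'; split => //; apply: subset_closure.
- move=> y; case: (pselect (y = y0)) => [->|yy0].
    by rewrite psi'y0 => z ->.
  have [m [Cm nCm]] := piece_ex y yy0; rewrite (psi'E y m yy0 Cm nCm).
  exact: val_sub.
- exists z0; split => // W oW Wz0; have [k hk] := usc_aux W oW Wz0.
  apply: filterS (nbhs_open (cC k.+1).1 (Cy0 k.+1)) => y' Cy'.
  exact: (hk y' Cy').1.
Qed.

Lemma GO_flip (X : topologicalType) (le : X -> X -> Prop) :
  GO_space le -> GO_space (fun a b => le b a).
Proof.
move=> [[refl anti trans total] oR oL base]; split => //.
- split.
  + exact: refl.
  + move=> x y h1 h2; exact: anti h2 h1.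
  + move=> x y z h1 h2; exact: trans h2 h1.
  + move=> x y; case: (total x y); tauto.
- move=> U x oU Ux; have [V [oV cV Vx VU]] := base U x oU Ux.
  exists V; split => // a b c Va Vc h1 h2; exact: cV c b a Vc Va h2 h1.
Qed.

Lemma left_data (X : topologicalType) (le : X -> X -> Prop) (T : Type)
  (P : T -> X -> Prop) (x0 : X) :
  GO_space le -> countable [set: T] -> (forall t, closed (P t)) ->
  exists (a : nat -> X) (Q : nat -> set X), [/\
    (forall k, le (a k) x0),
    (forall k, open (Q k) /\ Q k x0),
    (forall k t w, P t w -> Q k w -> le w x0 -> w <> x0 ->
        ~ (le (a k) w /\ w <> a k) -> P t x0) &
    (forall W, open W -> W x0 -> exists k, forall j, (k <= j)%N ->
        forall w, le (a j) w -> le w x0 -> W w)].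
Proof.
move=> [[refl anti trans total] oR oL base] cT cP.
case: (pselect (exists U, [/\ open U, U x0 &
   forall w, U w -> le w x0 -> w = x0])) => [[U [oU Ux0 hU]]|nli].
  exists (fun=> x0), (fun=> U); split => //.
  - by move=> k t w _ Uw wx0 wnx0; exfalso; exact: wnx0 (hU w Uw wx0).
  - move=> W oW Wx0; exists 0%N => j _ w h1 h2; by rewrite (anti _ _ h2 h1).
have nli' : forall U, open U -> U x0 -> exists w, [/\ U w, le w x0 & w <> x0].
  move=> U oU Ux0; apply: contrapT => h; apply: nli; exists U; split => //.
  move=> w Uw wx0; apply: contrapT => wn; apply: h; by exists w.
have convex_left : forall W, open W -> W x0 -> exists l,
    [/\ le l x0, l <> x0 & forall w, le l w -> le w x0 -> W w].
  move=> W oW Wx0; have [V [oV cV Vx0 VW]] := base W x0 oW Wx0.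
  have [l [Vl lx0 lnx0]] := nli' V oV Vx0; exists l; split => // w lw wx0.
  apply: VW; exact: cV l w x0 Vl Vx0 lw wx0.
case: (pselect (exists s : nat -> X, (forall k, le (s k) x0 /\ s k <> x0) /\
   (forall l, le l x0 -> l <> x0 -> exists k, le l (s k)))) => [[s [hs cof]]|ncof].
  pose a := fix a n := if n is m.+1 then
     (if pselect (le (a m) (s m.+1)) then s m.+1 else a m) else s 0%N.
  have ha : forall n, le (a n) x0 /\ a n <> x0.
    elim => [|n IH] /=; first exact: hs.
    by destruct (pselect (le (a n) (s n.+1))) as [h|h]; [exact: hs | exact: IH].
  have hsa : forall n, le (s n) (a n).
    case => [|n] /=; first exact: refl.
    destruct (pselect (le (a n) (s n.+1))) as [h|h]; first exact: refl.
    by case: (total (a n) (s n.+1)).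
  have hstep : forall n, le (a n) (a n.+1).
    move=> n /=; destruct (pselect (le (a n) (s n.+1))) as [h|h];
      [exact: h | exact: refl].
  have mono : forall n m, (n <= m)%N -> le (a n) (a m).
    move=> n; elim => [|m IH]; first by rewrite leqn0 => /eqP ->; exact: refl.
    rewrite leq_eqVlt => /orP [/eqP ->|]; first exact: refl.
    rewrite ltnS => /IH h; exact: trans _ _ _ h (hstep m).
  exists a, (fun k => [set w | le (a k) w /\ w <> a k]); split.
  - by move=> k; have [] := ha k.
  - move=> k; split; first exact: oR.
    by have [h1 h2] := ha k; split => // e; apply: h2.
  - by move=> k t w _ Qw _ _ nlt; exfalso; apply: nlt.
  - move=> W oW Wx0; have [l [lx0 lnx0 hl]] := convex_left W oW Wx0.
    have [k hk] := cof l lx0 lnx0; exists k => j kj w ajw wx0; apply: hl => //.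
    exact: trans _ _ _ hk (trans _ _ _ (hsa k) (trans _ _ _ (mono k j kj) ajw)).
have [ld [ldx0 ldnx0 _]] := convex_left setT openT I.
have hl : forall t, exists l, ~ P t x0 ->
    [/\ le l x0, l <> x0 & forall w, le l w -> le w x0 -> ~ P t w].
  move=> t; case: (pselect (P t x0)) => [Px|nPx]; first by exists x0.
  have [l [h1 h2 h3]] := convex_left (~` P t) (closed_openC (cP t)) nPx.
  by exists l.
have [g hg] := choice hl.
have [c cinj] := countable_injP _ cT.
have hsT : forall n, exists l, [/\ le l x0, l <> x0 &
    forall t, c t = n -> ~ P t x0 -> l = g t].
  move=> n; case: (pselect (exists t, c t = n /\ ~ P t x0)) => [[t [ct nP]]|nt].
    have [h1 h2 _] := hg t nP; exists (g t); split => // t' ct' _.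
    by have -> : t' = t by apply: cinj; rewrite ?inE // ct ct'.
  exists ld; split => // t ct nP; exfalso; apply: nt; by exists t.
have [s hs] := choice hsT.
have : exists l, [/\ le l x0, l <> x0 & forall k, le (s k) l].
  apply: contrapT => nb; apply: ncof; exists s; split.
    by move=> k; have [] := hs k.
  move=> l lx0 lnx0; apply: contrapT => nk; apply: nb; exists l; split => // k.
  case: (total (s k) l) => // h; exfalso; apply: nk; by exists k.
move=> [l [lx0 lnx0 hb]].
exists (fun=> x0), (fun=> [set w | le l w /\ w <> l]); split => //.
- by move=> k; split; [exact: oR | split => // e; apply: lnx0].
- move=> k t w Ptw [lw wnl] wx0 wnx0 _; apply: contrapT => nP.
  have [h1 h2 h3] := hg t nP; have [_ _ h4] := hs (c t).
  have gl : le (g t) l by rewrite -(h4 t erefl nP); exact: hb.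
  exact: (h3 w (trans _ _ _ gl lw) wx0).
- move=> W oW Wx0; exists 0%N => j _ w h1 h2; by rewrite (anti _ _ h2 h1).
Qed.

Lemma open_fst (U V : topologicalType) (A : set U) :
  open A -> open [set p : U * V | A p.1].
Proof.
move=> oA; rewrite openE => -[a b] /= Aa.
exists (A, setT) => //=; last by move=> [a' b'] [].
by split => //=; [exact: nbhs_open | exact: filterT].
Qed.

Lemma open_snd (U V : topologicalType) (B : set V) :
  open B -> open [set p : U * V | B p.2].
Proof.
move=> oB; rewrite openE => -[a b] /= Bb.
exists (setT, B) => //=; last by move=> [a' b'] [].
by split => //=; [exact: filterT | exact: nbhs_open].
Qed.

Lemma open_setX' (U V : topologicalType) (A : set U) (B : set V) :
  open A -> open B -> open [set p : U * V | A p.1 /\ B p.2].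
Proof. move=> oA oB; have h := openI (open_fst (V:=V) oA) (open_snd (U:=U) oB); exact h. Qed.

Lemma closed_fst (U V : topologicalType) (A : set U) :
  closed A -> closed [set p : U * V | A p.1].
Proof. by move=> cA; rewrite -openC; exact: (open_fst (V:=V) (closed_openC cA)). Qed.

Lemma closed_snd (U V : topologicalType) (B : set V) :
  closed B -> closed [set p : U * V | B p.2].
Proof. by move=> cB; rewrite -openC; exact: (open_snd (U:=U) (closed_openC cB)). Qed.

Lemma nbhs_pair (U V : topologicalType) (a : U) (b : V) (W : set (U * V)) :
  nbhs (a, b) W -> exists A B, [/\ nbhs a A, nbhs b B &
     forall a' b', A a' -> B b' -> W (a', b')].
Proof.
move=> [[A B] /= [nA nB] h]; exists A, B; split => // a' b' Aa Bb.
by apply: h; split.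
Qed.

Lemma fiber_closed (U V : topologicalType) (F : set (U * V)) (e : U) :
  closed F -> closed [set w | F (e, w)].
Proof.
move=> cF; rewrite -openC; rewrite openE => w nFw.
have : nbhs (e, w) (~` F) by apply: nbhs_open => //; exact: closed_openC.
move=> /nbhs_pair [A [B [nA nB h]]]; apply: filterS nB => w' Bw' Fw'.
exact: h _ _ (nbhs_singleton nA) Bw' Fw'.
Qed.

Lemma prod_T1 (U V : topologicalType) : T1_space U -> T1_space V ->
  T1_space (U * V)%type.
Proof.
move=> hU hV [a b] [a' b'] /eqP neq.
case: (pselect (a = a')) => [ea|na].
  have nb : b != b' by apply/eqP => eb; apply: neq; rewrite ea eb.
  have [B [oB Bb nBb']] := hV b b' nb.
  exists [set p | B p.2]; split; first exact: open_snd.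
    by rewrite inE; move: Bb; rewrite inE.
  by rewrite inE; move: nBb'; rewrite inE.
have [A [oA Aa nAa']] := hU a a' (introN eqP na).
exists [set p | A p.1]; split; first exact: open_fst.
  by rewrite inE; move: Aa; rewrite inE.
by rewrite inE; move: nAa'; rewrite inE.
Qed.

Local Open Scope ring_scope.

Lemma product_key (X E Y : topologicalType) (le : X -> X -> Prop) :
  GO_space le -> countable [set: E] -> metrizable E ->
  T1_space X -> T1_space E ->
  countable [set: Y] -> regular_space Y -> T1_space Y ->
  forall (psi : Y -> set (E * X)) y0, goodmap psi ->
  exists psi' : Y -> set (E * X),
     [/\ goodmap psi', (forall y, psi' y `<=` psi y) &
        exists z0, psi' y0 = [set z0] /\
        (forall W, open W -> W z0 -> nbhs y0 [set y | psi' y `<=` W])].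
Proof.
move=> hGO cE [d [d0 dE dsym dtri dopen]] tX tE cY rY tY psi y0 gpsi.
have [[e0 x0] pz0] := (gpsi.1 y0).2.
have hGO' := hGO; move: hGO' => [[refl anti trans total] oR oL base].
have ball_open : forall x (rho : Rdefinitions.R), open [set e | d x e < rho].
  move=> x rho; apply/dopen => e /= hxe; exists (rho - d x e); first lra.
  move=> e' /= h; have := dtri x e e'; lra.
have cball_closed : forall (rho : Rdefinitions.R), closed [set e | d e0 e <= rho].
  move=> rho; rewrite -openC; apply/dopen => e /= hxe.
  have hxe' : rho < d e0 e by rewrite ltNge; apply/negP.
  exists (d e0 e - rho); first lra.
  move=> e' /= h h'; have := dtri e0 e' e; rewrite (dsym e' e); lra.
have nbhs_ball : forall A, nbhs e0 A -> exists2 rho : Rdefinitions.R, 0 < rho &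
    [set e | d e0 e < rho] `<=` A.
  move=> A nA; have oA := @open_interior _ A.
  have [rho rpos hr] := (proj1 (dopen A°) oA) e0 (nbhs_singleton (nbhs_interior nA)).
  exists rho => // e /hr; exact: interior_subset.
pose P (t : Y * E) w := psi t.1 (t.2, w).
have cP : forall t, closed (P t).
  move=> t; have h := fiber_closed (e:=t.2) (gpsi.1 t.1).1; exact h.
have cT : countable [set: (Y * E)%type].
  have -> : [set: (Y * E)%type] = [set: Y] `*` [set: E].
    by apply/seteqP; split => [[y e]|[y e]].
  exact: countableX.
have [aL [QL [L1 L2 L3 L4]]] := left_data (P:=P) x0 hGO cT cP.
have [bR [QR [R1 R2 R3 R4]]] := left_data (P:=P) x0 (GO_flip hGO) cT cP.
pose r (k : nat) : Rdefinitions.R := (k.+1%:R)^-1.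
have rpos : forall k, 0 < r k by move=> k; rewrite /r invr_gt0 ltr0n.
have rmono : forall k j, (k <= j)%N -> r j <= r k.
  by move=> k j kj; rewrite /r lef_pV2 ?posrE ?ltr0n // ler_nat ltnS.
have rsmall : forall rho : Rdefinitions.R, 0 < rho -> exists k, r k < rho.
  move=> rho rhop; exists (Num.truncn rho^-1).
  rewrite /r invf_plt ?posrE ?ltr0n //; exact: truncnS_gt.
pose Bk k := [set e | d e0 e < r k].
pose VX k := QL k `&` QR k.
pose G k := [set w | (le (aL k) w /\ w <> aL k) /\ (le w x0 /\ w <> x0)] `|`
            [set w | (le x0 w /\ w <> x0) /\ (le w (bR k) /\ w <> bR k)].
pose V k := [set p : E * X | Bk k p.1 /\ VX k p.2].
pose S k := [set p : E * X | Bk k p.1 /\ (p.2 = x0 \/ G k p.2)].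
have oG : forall k, open (G k).
  move=> k; apply: openU.
    have h := openI (oR (aL k)) (oL x0); exact h.
  have h := openI (oR x0) (oL (bR k)); exact h.
have oV : forall k, open (V k).
  move=> k; apply: open_setX'; first exact: ball_open.
  by apply: openI; [exact: (L2 k).1 | exact: (R2 k).1].
have Bk0 : forall k, Bk k e0.
  by move=> k; rewrite /Bk /= (proj2 (dE e0 e0) erefl).
have VX0 : forall k, VX k x0 by move=> k; split; [exact: (L2 k).2 | exact: (R2 k).2].
have retr : forall k y e w, psi y (e, w) -> Bk k e -> VX k w ->
    S k (e, w) \/ (psi y (e, x0) /\ S k (e, x0)).
  move=> k y e w pw Be [QLw QRw].
  case: (pselect (w = x0)) => [->|wx0]; first by left; split => //; left.
  case: (total w x0) => h.
    case: (pselect (le (aL k) w /\ w <> aL k)) => [hl|hl].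
      by left; split => //; right; left.
    right; split; last by split => //; left.
    exact: (L3 k (y, e) w pw QLw h wx0 hl).
  case: (pselect (le w (bR k) /\ w <> bR k)) => [hr|hr].
    by left; split => //; right; right.
  right; split; last by split => //; left.
  exact: (R3 k (y, e) w pw QRw h wx0 hr).
apply: (generic_key cY rY tY (psi:=psi) (y0:=y0) (z0:=(e0,x0)) (V:=V) (S:=S)
   gpsi pz0).
- exact: accessible_closed_set1 (prod_T1 tE tX) _.
- by move=> k; split; [exact: oV | split; [exact: Bk0 | exact: VX0]].
- move=> k y [e w] U pw [Be Sw] oU Uz.
  case: Sw => [/= ew|Gw].
    subst w.
    have nO : nbhs (e, x0) (U `&` V k).
      by apply: nbhs_open; [exact: openI oU (oV k) | split => //; split].
    have [A [B [nA nB h]]] := nbhs_pair nO.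
    have oO3 := open_setX' (@open_interior _ A) (@open_interior _ B).
    have nL : nbhs y [set y' | psi y' `&`
        [set p : E * X | A° p.1 /\ B° p.2] !=set0].
      by apply: nbhs_open; [exact: gpsi.2 _ oO3 | exists (e, x0)].
    apply: filterS nL => y' [[e' w'] [pw' [Ae' Bw']]].
    have [Uw' [Be' VXw']] := h e' w' (interior_subset Ae') (interior_subset Bw').
    have [Ux0 _] := h e' x0 (interior_subset Ae') (nbhs_singleton nB).
    by case: (retr k y' e' w' pw' Be' VXw') => [Sw'|[px0 Sx0]];
      [exists (e', w') | exists (e', x0)].
  have oO : open (U `&` [set p : E * X | Bk k p.1 /\ G k p.2]).
    by apply: openI oU _; apply: open_setX'; [exact: ball_open | exact: oG].
  have nL : nbhs y [set y' | psi y' `&`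
        (U `&` [set p : E * X | Bk k p.1 /\ G k p.2]) !=set0].
    by apply: nbhs_open; [exact: gpsi.2 _ oO | exists (e, w)].
  apply: filterS nL => y' [z' [pz' [Uz' [B' G']]]].
  by exists z' => //; split => //; split => //; right.
- move=> k y [e w] pw [Be VXw].
  by case: (retr k y e w pw Be VXw) => [Sw|[px0 Sx0]];
    [exists (e, w) | exists (e, x0)].
move=> W oW Wz0.
have [A [B [nA nB h]]] := nbhs_pair (nbhs_open oW Wz0).
have [rho rhop hrho] := nbhs_ball A nA.
have [kB hkB] := rsmall rho rhop.
have oB := @open_interior _ B.
have [kL hL] := L4 _ oB nB.
have [kR hR] := R4 _ oB nB.
have cI : forall a b, closed [set w | le a w /\ le w b].
  move=> a b; rewrite -openC.
  have -> : ~` [set w | le a w /\ le w b] =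
      [set w | le w a /\ w <> a] `|` [set w | le b w /\ w <> b].
    apply/seteqP; split => w /=.
      move=> nw; case: (pselect (le a w)) => [aw|naw].
        right; case: (total w b) => [wb|bw]; first by exfalso; apply: nw.
        by split => // ewb; apply: nw; split => //; rewrite ewb; exact: refl.
      left; case: (total a w) => [aw|wa]; first by exfalso; apply: naw.
      by split => // ewa; apply: naw; rewrite ewa; exact: refl.
    move=> [[wa wna]|[bw wnb]] [aw wb].
      by apply: wna; exact: anti.
    by apply: wnb; exact: anti.
  exact: openU.
exists (maxn kB (maxn kL kR)) => j hj.
have hBj : (kB <= j)%N by apply: leq_trans hj; exact: leq_maxl.
have hLj : (kL <= j)%N.
  by apply: leq_trans hj; apply: leq_trans (leq_maxr _ _); exact: leq_maxl.
have hRj : (kR <= j)%N.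
  by apply: leq_trans hj; apply: leq_trans (leq_maxr _ _); exact: leq_maxr.
pose K := [set p : E * X | d e0 p.1 <= r j] `&`
          [set p : E * X | le (aL j) p.2 /\ le p.2 (bR j)].
have cK : closed K.
  apply: closedI; first exact: closed_fst (cball_closed _).
  exact: closed_snd (cI _ _).
apply: subset_trans (closure_min cK _) _.
  move=> [e w] [/= Be Sw]; split => /=; first exact: ltW.
  case: Sw => [->|[[[h1 _] [h2 _]]|[[h1 _] [h2 _]]]].
  - by split; [exact: L1 | exact: R1].
  - by split => //; exact: trans _ _ _ h2 (R1 j).
  - by split => //; exact: trans _ _ _ (L1 j) h1.
move=> [e w] [/= de [h1 h2]]; apply: h.
  apply: hrho => /=; have := rmono _ _ hBj; lra.
case: (total w x0) => hw.
  exact: interior_subset (hL j hLj w h1 hw).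
exact: interior_subset (hR j hRj w h2 hw).
Qed.
Local Close Scope ring_scope.

Theorem mainTheorem15 (X : topologicalType) (le : X -> X -> Prop)
  (E : topologicalType) :
  GO_space le -> T1_space X ->
  countable [set: E] -> metrizable E -> T1_space E ->
  C_selective (E * X)%type.
Proof.
move=> hGO tX cE mE tE Y cY rY tY phi hphi hlsc.
apply: (selection_from_key cY _ (conj hphi hlsc)).
move=> psi y0 gpsi.
exact: (product_key hGO cE mE tX tE cY rY tY y0 gpsi).
Qed.
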